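(* Let $q$ be a prime power and $F/\mathbb{F}_q$ an algebraic function field with full constant field $\mathbb{F}_q$ of genus $g\geq 2$. For $n\geq 0$ let $A_n$ be the number of effective divisors of degree $n$ of $F$, for $r\geq1$ let $B_r$ be the number of places of degree $r$ of $F$, let $\Sigma_2=q^{g-1}\sum_{n=0}^{g-2}A_n/q^n$ and $\Delta_2=\{r:1\leq r\leq g-2,\ B_r\geq 1\}$. Then $$\Sigma_2\leq q^{g-1}\prod_{r\in\Delta_2}\left[\sum_{b=0}^{\lfloor\frac{g-2}{r}\rfloor}\frac{1}{q^{rb}}\binom{B_r+b-1}{b}\right].$$ *)

(* Defs.v *)
From HB Require Import structures.
From mathcomp Require Import all_boot all_order all_algebra.
From Stdlib Require List.
From Stdlib Require Import ClassicalEpsilon.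
Set Implicit Arguments. Unset Strict Implicit. Unset Printing Implicit Defensive.
Import Order.TTheory GRing.Theory Num.Theory.
Local Open Scope ring_scope.

Definition in_Kx (K : fieldType) (F : fieldType) (phi : {rmorphism K -> F})
  (x y : F) : Prop :=
  exists p r : {poly K}, (map_poly phi r).[x] != 0 /\
     y = (map_poly phi p).[x] / (map_poly phi r).[x].

(* F/K is an algebraic function field (of one variable): F is a finite
   extension of K(x) for some x transcendental over K. *)
Definition function_field (K : fieldType) (F : fieldType)
  (phi : {rmorphism K -> F}) : Prop :=
  exists x : F,
    (forall p : {poly K}, p != 0 -> (map_poly phi p).[x] != 0) /\
    exists (m : nat) (e : 'I_m -> F), forall y : F,
      exists c : 'I_m -> F, (forall i, in_Kx phi x (c i)) /\
        y = \sum_(i < m) c i * e i.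

Definition full_constant_field (K : fieldType) (F : fieldType)
  (phi : {rmorphism K -> F}) : Prop :=
  forall y : F, (exists p : {poly K}, p != 0 /\ root (map_poly phi p) y) ->
    exists c : K, y = phi c.

Definition valuation_ring (K : fieldType) (F : fieldType)
  (phi : {rmorphism K -> F}) (O : F -> Prop) : Prop :=
  [/\ (forall c, O (phi c)),
      (exists z, O z /\ forall c, z <> phi c),
      (exists z, ~ O z),
      (forall a b, O a -> O b -> O (a + b) /\ O (a * b) /\ O (- a))
    & (forall z, O z \/ O z^-1)].

(* Places are in bijection with valuation rings (P = maximal ideal of O_P);
   we represent a place by its valuation ring. *)
Record place (K : fieldType) (F : fieldType) (phi : {rmorphism K -> F}) := Place {
  vring : F -> Prop;
  vring_valuation : valuation_ring phi vring }.

(* the place itself: the maximal ideal (non-units) of the valuation ring *)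
Definition in_place (K F : fieldType) (phi : {rmorphism K -> F})
  (P : place phi) (z : F) : Prop :=
  vring P z /\ (z = 0 \/ ~ vring P z^-1).

(* the residue class field O_P/P has dimension n over K *)
Definition res_dim (K F : fieldType) (phi : {rmorphism K -> F})
  (P : place phi) (n : nat) : Prop :=
  exists e : 'I_n -> F,
    [/\ (forall i, vring P (e i)),
        (forall z, vring P z -> exists c : 'I_n -> K,
            in_place P (z - \sum_(i < n) phi (c i) * e i))
      & (forall c : 'I_n -> K, in_place P (\sum_(i < n) phi (c i) * e i) ->
            forall i, c i = 0)].

Definition deg_place (K F : fieldType) (phi : {rmorphism K -> F})
  (P : place phi) : nat :=
  epsilon (inhabits 0%N) (res_dim P).

Definition valuation_is (K F : fieldType) (phi : {rmorphism K -> F})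
  (P : place phi) (z : F) (n : int) : Prop :=
  exists t u : F,
    [/\ in_place P t, (forall w, in_place P w -> exists o, vring P o /\ w = t * o),
        vring P u, vring P u^-1 & z = t ^ n * u].

(* divisors: finitely supported functions place -> int *)
Definition divisor_fin (K F : fieldType) (phi : {rmorphism K -> F})
  (D : place phi -> int) : Prop :=
  exists s : seq (place phi), forall P, D P <> 0 -> List.In P s.

Definition div_deg (K F : fieldType) (phi : {rmorphism K -> F})
  (D : place phi -> int) : int :=
  epsilon (inhabits 0) (fun d : int => exists s : seq (place phi),
    [/\ List.NoDup s, (forall P, D P <> 0 -> List.In P s)
      & d = \sum_(P <- s) D P * (deg_place P)%:Z]).

Definition effective (K F : fieldType) (phi : {rmorphism K -> F})
  (D : place phi -> int) : Prop := forall P, 0 <= D P.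

Definition RR_space (K F : fieldType) (phi : {rmorphism K -> F})
  (A : place phi -> int) (z : F) : Prop :=
  z = 0 \/ forall P, exists n, valuation_is P z n /\ - A P <= n.

Definition lin_dim (K F : fieldType) (phi : {rmorphism K -> F})
  (S : F -> Prop) (n : nat) : Prop :=
  exists e : 'I_n -> F,
    [/\ (forall i, S (e i)),
        (forall z, S z -> exists c : 'I_n -> K, z = \sum_(i < n) phi (c i) * e i)
      & (forall c : 'I_n -> K, \sum_(i < n) phi (c i) * e i = 0 ->
            forall i, c i = 0)].

Definition is_genus (K F : fieldType) (phi : {rmorphism K -> F}) (g : nat) : Prop :=
  (forall (A : place phi -> int) (l : nat), divisor_fin A ->
      lin_dim phi (RR_space A) l -> div_deg A - l%:Z + 1 <= g%:Z) /\
  (exists (A : place phi -> int) (l : nat), [/\ divisor_fin A,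
      lin_dim phi (RR_space A) l & div_deg A - l%:Z + 1 = g%:Z]).

Definition card_is (T : Type) (S : T -> Prop) (n : nat) : Prop :=
  exists f : 'I_n -> T, injective f /\ forall x, S x <-> exists i, f i = x.

Definition num_eff_divisors (K F : fieldType) (phi : {rmorphism K -> F})
  (n : nat) (An : nat) : Prop :=
  card_is (fun D : place phi -> int =>
    [/\ divisor_fin D, effective D & div_deg D = n%:Z]) An.

Definition num_places (K F : fieldType) (phi : {rmorphism K -> F})
  (r : nat) (Br : nat) : Prop :=
  card_is (fun P : place phi => deg_place P = r) Br.

(* Main.v *)
Require Import Defs.
From HB Require Import structures.
From mathcomp Require Import all_boot all_order all_algebra.
From Stdlib Require List.
From Stdlib Require Import ClassicalEpsilon FunctionalExtensionality.
Set Implicit Arguments. Unset Strict Implicit. Unset Printing Implicit Defensive.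
Import Order.TTheory GRing.Theory Num.Theory.
Local Open Scope ring_scope.

From mathcomp Require Import zify.
Definition szf (M N : nat) (u : {ffun 'I_M -> 'I_N.+1}) : nat := (\sum_(j < M) (u j : nat))%N.
Definition validB (M N B : nat) (u : {ffun 'I_M -> 'I_N.+1}) : bool :=
  [forall j : 'I_M, (B <= j)%N ==> ((u j : nat) == 0%N)].

Lemma sum_nat_eq (R : nmodType) K s (F : nat -> R) :
  \sum_(0 <= b < K) (if s == b then F b else 0) = if (s < K)%N then F s else 0.
Proof.
elim: K => [|K IH]; first by rewrite big_nil.
rewrite big_nat_recr //= IH.
have [h|h|->] := ltngtP s K.
- by rewrite addr0 ltnS (ltnW h).
- by rewrite addr0 ltnS leqNgt h.
- by rewrite add0r ltnSn.
Qed.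

Lemma count_le M N B b : (B <= M)%N ->
  (#|[set u : {ffun 'I_M -> 'I_N.+1} | validB B u && (szf u == b)]| <= 'C(B + b - 1, b))%N.
Proof.
move=> BM.
case: B BM => [|m] BM.
  have H0 : forall u : {ffun 'I_M -> 'I_N.+1}, validB 0 u -> u = [ffun => ord0].
    move=> u /forallP hv; apply/ffunP => j; rewrite ffunE; apply/val_inj => /=.
    exact/eqP/(implyP (hv j)).
  have Hs : forall b, [set u : {ffun 'I_M -> 'I_N.+1} | validB 0 u && (szf u == b)] \subset [set [ffun => ord0]].
    move=> b'; apply/subsetP => u; rewrite !inE => /andP[/H0 -> _]; by [].
  case: b => [|b].
    by rewrite bin0; apply: leq_trans (subset_leq_card (Hs 0%N)) _; rewrite cards1.
  rewrite add0n subn1 /= bin_small // leqn0 cards_eq0; apply/eqP/setP => u; rewrite !inE.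
  apply/negP => /andP[/H0 -> /eqP].
  by rewrite /szf big1 // => j _; rewrite ffunE.
rewrite addSn subn1 succnK -[X in 'C(_, X)](addKn m b) bin_sub ?leq_addr //.
rewrite -card_ord_partitions.
set S := [set u : {ffun 'I_M -> 'I_N.+1} | _].
pose h (u : {ffun 'I_M -> 'I_N.+1}) : m.+1.-tuple 'I_b.+1 :=
  [tuple (inord (u (widen_ord BM j)) : 'I_b.+1) | j < m.+1].
have Hle : forall u, u \in S -> forall j, (u j <= b)%N.
  move=> u; rewrite inE => /andP[_ /eqP <-] j.
  by rewrite /szf (bigD1 j) //= leq_addr.
have Hz : forall u, u \in S -> forall j : 'I_M, (m.+1 <= j)%N -> (u j : nat) = 0%N.
  move=> u; rewrite inE => /andP[/forallP hv _] j hj; exact/eqP/(implyP (hv j)).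
have Hsum : forall u, u \in S -> (\sum_(i <- h u) (i : nat) = szf u)%N.
  move=> u uS; rewrite big_tuple /szf (bigID (fun j : 'I_M => (j < m.+1)%N)) /=.
  rewrite [X in (_ = _ + X)%N]big1 ?addn0; last first.
    by move=> j; rewrite -leqNgt => hj; rewrite (Hz u uS j hj).
  rewrite (big_ord_narrow BM).
  by apply: eq_bigr => j _; rewrite tnth_mktuple inordK // ltnS Hle.
rewrite -(card_in_imset (f := h) (D := mem S)).
  apply: subset_leq_card; apply/subsetP => t /imsetP[u uS ->].
  rewrite inE Hsum //; move: uS; rewrite inE => /andP[_ ->] //.
move=> u u' uS u'S /= huu; apply/ffunP => j; apply/val_inj.
case: (ltnP j m.+1) => hj; last by rewrite /= (Hz u uS j hj) (Hz u' u'S j hj).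
have := congr1 (fun t : m.+1.-tuple 'I_b.+1 => (tnth t (Ordinal hj) : nat)) huu.
rewrite /= !tnth_mktuple !inordK ?ltnS ?Hle //.
by have -> : widen_ord BM (Ordinal hj) = j by apply/val_inj.
Qed.

Lemma factor_le M N B r (x : rat) : (0 < r)%N -> 0 <= x -> (B <= M)%N ->
  \sum_(u : {ffun 'I_M -> 'I_N.+1})
     (if validB B u && (r * szf u <= N)%N then x ^+ (r * szf u) else 0)
  <= \sum_(0 <= b < (N %/ r).+1) ('C(B + b - 1, b))%:R * x ^+ (r * b).
Proof.
move=> r0 x0 BM.
rewrite (eq_bigr (fun u => \sum_(0 <= b < (N %/ r).+1)
   (if validB B u && (szf u == b) then x ^+ (r * b) else 0))); last first.
  move=> u _; case: (validB B u) => /=; last by rewrite big1.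
  rewrite (sum_nat_eq _ _ (fun b => x ^+ (r * b))) ltnS leq_divRL // mulnC.
  by [].
rewrite exchange_big /=; apply: ler_sum => b _.
rewrite -big_mkcond sumr_const -[in leLHS]mulr_natl ler_wpM2r ?exprn_ge0 // ler_nat.
by have := count_le N b BM; rewrite cardsE.
Qed.

Definition wt N M N' (t : {ffun 'I_N -> {ffun 'I_M -> 'I_N'.+1}}) : nat :=
  (\sum_(i < N) i.+1 * szf (t i))%N.

Lemma main_comb N M (B : nat -> nat) (x : rat) (Ac : nat -> nat) :
  0 <= x -> (forall i, (i < N)%N -> (B i.+1 <= M)%N) ->
  (forall n, (n <= N)%N -> (Ac n <= #|[set t : {ffun 'I_N -> {ffun 'I_M -> 'I_N.+1}} |
       [forall i : 'I_N, validB (B i.+1) (t i)] && (wt t == n)]|)%N) ->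
  \sum_(0 <= n < N.+1) (Ac n)%:R * x ^+ n <=
  \prod_(1 <= r < N.+1 | (1 <= B r)%N)
     \sum_(0 <= b < (N %/ r).+1) ('C(B r + b - 1, b))%:R * x ^+ (r * b).
Proof.
move=> x0 hBM hA.
pose T := {ffun 'I_N -> {ffun 'I_M -> 'I_N.+1}}.
pose P (t : T) := [forall i : 'I_N, validB (B i.+1) (t i)].
apply: le_trans (_ : _ <= \sum_(0 <= n < N.+1)
    (#|[set t : T | P t && (wt t == n)]|)%:R * x ^+ n) _.
  rewrite big_nat [leRHS]big_nat; apply: ler_sum => n /andP[_ hn].
  by rewrite ler_wpM2r ?exprn_ge0 // ler_nat hA.
rewrite (eq_bigr (fun n => \sum_(t : T) (if P t && (wt t == n) then x ^+ n else 0))); last first.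
  by move=> n _; rewrite -big_mkcond sumr_const cardsE mulr_natl.
rewrite exchange_big /=.
pose G (i : 'I_N) (u : {ffun 'I_M -> 'I_N.+1}) :=
  if validB (B i.+1) u && (i.+1 * szf u <= N)%N then x ^+ (i.+1 * szf u) else 0.
apply: le_trans (_ : _ <= \sum_(t : T) \prod_(i < N) G i (t i)) _.
  apply: ler_sum => t _.
  have Gge0 : forall i u, 0 <= G i u.
    by move=> i u; rewrite /G; case: ifP => // _; rewrite exprn_ge0.
  case Pt : (P t) => /=; last by rewrite big1 ?prodr_ge0.
  rewrite (sum_nat_eq _ _ (fun n => x ^+ n)).
  case: ifP => hw; last by rewrite prodr_ge0.
  rewrite (eq_bigr (fun i : 'I_N => x ^+ (i.+1 * szf (t i)))); last first.
    move=> i _; rewrite /G.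
    have -> : validB (B i.+1) (t i) by move/forallP: Pt.
    have -> // : (i.+1 * szf (t i) <= N)%N.
    rewrite -ltnS; apply: leq_ltn_trans hw.
    by rewrite /wt (bigD1 i) //= leq_addr.
  by rewrite prodrXr.
rewrite -bigA_distr_bigA /=.
apply: le_trans (_ : _ <= \prod_(i < N)
   \sum_(0 <= b < (N %/ i.+1).+1) ('C(B i.+1 + b - 1, b))%:R * x ^+ (i.+1 * b)) _.
  apply: ler_prod => i _; apply/andP; split.
    by apply: sumr_ge0 => u _; rewrite /G; case: ifP => // _; rewrite exprn_ge0.
  by apply: factor_le => //; apply: hBM.
rewrite big_add1 /= big_mkord [leRHS]big_mkcond /=; apply: ler_prod => i _.
have S0 : 0 <= \sum_(0 <= b < (N %/ i.+1).+1) ('C(B i.+1 + b - 1, b))%:R * x ^+ (i.+1 * b).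
  by apply: sumr_ge0 => b _; rewrite mulr_ge0 ?exprn_ge0.
rewrite S0 /=; case: (B i.+1) => [|Bi] //=.
rewrite big_ltn // big_nat big1 ?addr0 ?bin0 ?muln0 ?expr0 ?mulr1 //.
move=> b /andP[hb _].
by rewrite add0n bin_small ?mul0r // subn1 prednK.
Qed.
Definition place_eqb (K F : fieldType) (phi : {rmorphism K -> F}) (P Q : place phi) : bool :=
  if excluded_middle_informative (P = Q) then true else false.
Lemma place_eqP (K F : fieldType) (phi : {rmorphism K -> F}) : Equality.axiom (@place_eqb K F phi).
Proof. by move=> P Q; rewrite /place_eqb; case: excluded_middle_informative => h; constructor. Qed.
HB.instance Definition _ (K F : fieldType) (phi : {rmorphism K -> F}) :=
  hasDecEq.Build (place phi) (@place_eqP K F phi).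

Lemma In_mem (T : eqType) (x : T) (s : seq T) : List.In x s <-> x \in s.
Proof.
elim: s => [|y s IH] //=; rewrite in_cons; split.
  by case=> [->|/IH ->]; rewrite ?eqxx ?orbT.
by case/orP => [/eqP ->|/IH]; [left|right].
Qed.

Lemma NoDup_uniq (T : eqType) (s : seq T) : List.NoDup s <-> uniq s.
Proof.
elim: s => [|y s IH] /=; first by split => // _; constructor.
rewrite List.NoDup_cons_iff IH; split.
  by case=> h1 h2; rewrite h2 andbT; apply/negP => /In_mem.
by case/andP => h1 h2; split => //; move/In_mem; apply/negP.
Qed.

Lemma sum_supp (T : eqType) (D : T -> int) (f : T -> int) (s s' : seq T) :
  (forall P, D P = 0 -> f P = 0) ->
  uniq s -> uniq s' -> (forall P, D P != 0 -> P \in s) -> (forall P, D P != 0 -> P \in s') ->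
  \sum_(P <- s) f P = \sum_(P <- s') f P.
Proof.
move=> f0 us us' cs cs'.
have E : forall r : seq T, \sum_(P <- r) f P = \sum_(P <- r | D P != 0) f P.
  move=> r; rewrite [RHS]big_mkcond /=; apply: eq_bigr => P _.
  by case: (eqVneq (D P) 0) => [h|h] /=; [exact: f0|].
rewrite !E -!(big_filter _ (fun P => D P != 0)); apply: perm_big.
apply: uniq_perm; rewrite ?filter_uniq // => P; rewrite !mem_filter.
by case: (D P != 0) (cs P) (cs' P) => // -> // ->.
Qed.

Lemma div_deg_eq (K F : fieldType) (phi : {rmorphism K -> F}) (D : place phi -> int) (s : seq (place phi)) :
  divisor_fin D -> uniq s -> (forall P, D P != 0 -> P \in s) ->
  div_deg D = \sum_(P <- s) D P * (deg_place P)%:Z.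
Proof.
move=> [s0 hs0] us cs.
have ex : exists d : int, exists s1 : seq (place phi), [/\ List.NoDup s1,
    (forall P, D P <> 0 -> List.In P s1) & d = \sum_(P <- s1) D P * (deg_place P)%:Z].
  exists (\sum_(P <- undup s0) D P * (deg_place P)%:Z), (undup s0); split => //.
    by apply/NoDup_uniq; rewrite undup_uniq.
  by move=> P /hs0 /In_mem hP; apply/In_mem; rewrite mem_undup.
have := epsilon_spec (inhabits 0) _ ex; rewrite -/(div_deg D).
case=> s1 [/NoDup_uniq u1 c1 ->]; apply: (sum_supp (D := D)) => //.
- by move=> P h /=; rewrite h mul0r.
- by move=> P /eqP /c1 /In_mem.
Qed.

Lemma term_le (K F : fieldType) (phi : {rmorphism K -> F}) (D : place phi -> int) P :
  divisor_fin D -> effective D -> D P * (deg_place P)%:Z <= div_deg D.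
Proof.
move=> [s0 hs0] eD.
have cs : forall Q, D Q != 0 -> Q \in undup s0.
  by move=> Q /eqP /hs0 /In_mem; rewrite mem_undup.
rewrite (div_deg_eq (s := undup s0)) ?undup_uniq //; last by exists s0.
have ge0 : forall Q, 0 <= D Q * (deg_place Q)%:Z by move=> Q; rewrite mulr_ge0.
case: (eqVneq (D P) 0) => [->|nz]; first by rewrite mul0r sumr_ge0.
rewrite (bigD1_seq P) ?cs ?undup_uniq //= lerDl sumr_ge0 //.
Qed.

Lemma no_deg0 (K F : fieldType) (phi : {rmorphism K -> F}) a :
  num_eff_divisors phi 0 a -> forall P : place phi, deg_place P <> 0%N.
Proof.
move=> [f [finj hf]] P0 d0.
pose Dk (k : nat) : place phi -> int := fun P => if P == P0 then k%:Z else 0.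
have fin : forall k, divisor_fin (Dk k).
  move=> k; exists [:: P0] => P; rewrite /Dk; case: eqP => [->|_] /= h; [by left | by case: h].
have HD : forall k, exists i, f i = Dk k.
  move=> k; apply/hf; split => //.
  - by move=> P; rewrite /Dk; case: eqP.
  - rewrite (div_deg_eq (s := [:: P0])) //; first by rewrite big_seq1 d0 mulr0.
    move=> P; rewrite /Dk mem_seq1; case: (eqVneq P P0) => // _; rewrite eqxx.
pose g (k : 'I_a.+1) : 'I_a := proj1_sig (constructive_indefinite_description _ (HD k)).
have ginj : injective g.
  move=> k k' e.
  have h1 := proj2_sig (constructive_indefinite_description _ (HD k)).
  have h2 := proj2_sig (constructive_indefinite_description _ (HD k')).
  rewrite -/(g k) in h1; rewrite -/(g k') in h2.
  have := congr1 (fun D => D P0) (etrans (esym h1) (etrans (congr1 f e) h2)).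
  by rewrite /Dk eqxx => -[] /val_inj.
by have := leq_card g ginj; rewrite !card_ord ltnn.
Qed.

Lemma inj_bound (K F : fieldType) (phi : {rmorphism K -> F}) (A B : nat -> nat) (N M : nat) :
  (forall n, num_eff_divisors phi n (A n)) ->
  (forall r, (1 <= r)%N -> num_places phi r (B r)) ->
  (forall i, (i < N)%N -> (B i.+1 <= M)%N) ->
  forall n, (n <= N)%N -> (A n <= #|[set t : {ffun 'I_N -> {ffun 'I_M -> 'I_N.+1}} |
       [forall i : 'I_N, validB (B i.+1) (t i)] && (wt t == n)]|)%N.
Proof.
move=> hA hB hBM n hn.
have nd0 := no_deg0 (hA 0%N).
pose e (i : nat) : 'I_(B i.+1) -> place phi :=
  proj1_sig (constructive_indefinite_description _ (hB i.+1 isT)).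
have espec : forall i, injective (e i) /\ forall P, deg_place P = i.+1 <-> exists j, e i j = P.
  move=> i; exact: (proj2_sig (constructive_indefinite_description _ (hB i.+1 isT))).
have edeg : forall i j, deg_place (e i j) = i.+1.
  by move=> i j; apply/(proj2 (espec i) _).2; exists j.
pose good (D : place phi -> int) := [/\ divisor_fin D, effective D & div_deg D = n%:Z].
have hsupp : forall D P, good D -> D P != 0 ->
    [/\ (0 < deg_place P)%N, (deg_place P <= N)%N & (`|D P| <= N)%N].
  move=> D P [fD eD dD] nz.
  have := term_le P fD eD; rewrite dD.
  have dP0 := nd0 P.
  have := eD P; case: (D P) nz => [d|d] //= nz _.
  rewrite -PoszM lez_nat => h.
  have d0 : (0 < d)%N by case: d nz h.
  split; nia.
have absN : forall D P, good D -> (`|D P| <= N)%N.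
  move=> D P gD; case: (eqVneq (D P) 0) => [->|nz] //; by case: (hsupp D P gD nz).
pose Phi (D : place phi -> int) : {ffun 'I_N -> {ffun 'I_M -> 'I_N.+1}} :=
  [ffun i : 'I_N => [ffun j : 'I_M => inord (odflt 0%N
      (omap (fun j' : 'I_(B i.+1) => `|D (e i j')|%N) (insub (val j)))) : 'I_N.+1]].
have PhiE : forall D, good D -> forall (i : 'I_N) (j : 'I_(B i.+1)),
    (Phi D i (widen_ord (hBM i (ltn_ord i)) j) : nat) = `|D (e i j)|%N.
  move=> D gD i j; rewrite /Phi !ffunE.
  have -> : insub (val (widen_ord (hBM i (ltn_ord i)) j)) = Some j := valK j.
  by rewrite /= inordK // ltnS absN.
have Phi0 : forall D (i : 'I_N) (j : 'I_M), (B i.+1 <= j)%N -> (Phi D i j : nat) = 0%N.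
  move=> D i j hj; rewrite /Phi !ffunE insubF /=; first by rewrite inordK.
  by rewrite ltnNge hj.
have Pvalid : forall D, [forall i : 'I_N, validB (B i.+1) (Phi D i)].
  move=> D; apply/forallP => i; apply/forallP => j; apply/implyP => hj; apply/eqP.
  exact: Phi0.
have szE : forall D (i : 'I_N), good D ->
    szf (Phi D i) = (\sum_(j : 'I_(B i.+1)) `|D (e i j)|)%N.
  move=> D i gD; rewrite /szf (bigID (fun j : 'I_M => (j < B i.+1)%N)) /=.
  rewrite [X in (_ + X)%N]big1 ?addn0; last by move=> j; rewrite -leqNgt; exact: Phi0.
  rewrite (big_ord_narrow (hBM i (ltn_ord i))); apply: eq_bigr => j _; exact: PhiE.
pose T : finType := {i : 'I_N & 'I_(B i.+1)}.
pose E (p : T) := e (tag p) (tagged p).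
have Einj : injective E.
  case=> i j [i' j'] /= h.
  have hd := congr1 (@deg_place _ _ phi) h; rewrite /E /= !edeg in hd.
  have ii : i = i' by apply/val_inj; case: hd.
  subst i'; rewrite /E /= in h.
  by rewrite ((proj1 (espec i)) _ _ h).
have covers : forall D P, good D -> D P != 0 -> P \in [seq E p | p <- enum T].
  move=> D P gD nz; have [d0 dN _] := hsupp D P gD nz.
  have hi : ((deg_place P).-1 < N)%N by rewrite prednK.
  have [j hj] : exists j, e (Ordinal hi) j = P.
    by apply/(proj2 (espec _) _).1; rewrite /= prednK.
  rewrite -hj (_ : e _ j = E (existT _ (Ordinal hi) j)) //.
  by apply: map_f; rewrite mem_enum.
have wtE : forall D, good D -> wt (Phi D) = n.
  move=> D gD; have [fD eD dD] := gD.
  suff : (wt (Phi D))%:Z = n%:Z by case.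
  rewrite -dD (div_deg_eq (s := [seq E p | p <- enum T])) //; last first.
  - by move=> P; exact: covers.
  - by rewrite map_inj_uniq // enum_uniq.
  rewrite big_map big_enum /=.
  have step : \sum_(p in T) D (E p) * (deg_place (E p))%:Z =
      \sum_(i : 'I_N) \sum_(j : 'I_(B i.+1)) D (e i j) * (deg_place (e i j))%:Z.
    rewrite (sig_big_dep (J := fun i : 'I_N => 'I_(B i.+1)) xpredT (fun _ _ => true)
       (fun i j => D (e i j) * (deg_place (e i j))%:Z)).
    by apply: eq_bigl.
  rewrite step /wt -natz natr_sum; apply: eq_bigr => i _.
  rewrite szE // natrM natr_sum mulr_sumr; apply: eq_bigr => j _.
  rewrite edeg !natz gez0_abs; [exact: mulrC | exact: eD].
have Phiinj : forall D1 D2, good D1 -> good D2 -> Phi D1 = Phi D2 -> D1 = D2.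
  move=> D1 D2 g1 g2 h; apply: functional_extensionality => P.
  have [_ e1 _] := g1; have [_ e2 _] := g2.
  have key : (0 < deg_place P)%N -> (deg_place P <= N)%N -> D1 P = D2 P.
    move=> d0 dN; have hi : ((deg_place P).-1 < N)%N by rewrite prednK.
    have [j hj] : exists j, e (Ordinal hi) j = P.
      by apply/(proj2 (espec _) _).1; rewrite /= prednK.
    have := congr1 (fun t : {ffun 'I_N -> {ffun 'I_M -> 'I_N.+1}} =>
       (t (Ordinal hi) (widen_ord (hBM (Ordinal hi) (ltn_ord (Ordinal hi))) j) : nat)) h.
    rewrite /= !PhiE // hj => habs.
    by rewrite -[D1 P](gez0_abs (e1 P)) -[D2 P](gez0_abs (e2 P)) habs.
  case: (eqVneq (D1 P) 0) => [z1|nz1]; last by have [d0 dN _] := hsupp _ _ g1 nz1; apply: key.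
  case: (eqVneq (D2 P) 0) => [z2|nz2]; last by have [d0 dN _] := hsupp _ _ g2 nz2; apply: key.
  by rewrite z1 z2.
have [f [finj hf]] := hA n.
have fgood : forall k, good (f k) by move=> k; apply/(hf (f k)); exists k.
have -> : A n = #|[set Phi (f k) | k in 'I_(A n)]|.
  rewrite card_imset ?card_ord // => k k' hk.
  by apply: finj; apply: Phiinj => //; apply: fgood.
apply: subset_leq_card; apply/subsetP => t /imsetP [k _ ->].
by rewrite inE Pvalid wtE ?eqxx //; apply: fgood.
Qed.

Theorem theorem3p9 (q : nat) (K : finFieldType) (F : fieldType)
  (phi : {rmorphism K -> F}) (g : nat) (A B : nat -> nat) :
  #|K| = q ->
  function_field phi -> full_constant_field phi ->
  is_genus phi g -> (2 <= g)%N ->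
  (forall n, num_eff_divisors phi n (A n)) ->
  (forall r, (1 <= r)%N -> num_places phi r (B r)) ->
  (q%:Q) ^+ (g - 1) * (\sum_(0 <= n < (g - 2).+1) (A n)%:Q / (q%:Q) ^+ n)
  <= (q%:Q) ^+ (g - 1) *
     \prod_(1 <= r < (g - 2).+1 | (1 <= B r)%N)
       (\sum_(0 <= b < ((g - 2) %/ r).+1)
          ('C(B r + b - 1, b))%:Q / (q%:Q) ^+ (r * b)).
Proof.
move=> _ _ _ _ _ hA hB.
set N := (g - 2)%N.
pose M := (\max_(i < N) B i.+1)%N.
have hBM : forall i, (i < N)%N -> (B i.+1 <= M)%N.
  by move=> i hi; apply: (leq_bigmax (F := fun i : 'I_N => B i.+1) (Ordinal hi)).
have x0 : 0 <= (q%:Q)^-1 by rewrite invr_ge0 ler0z.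
have key := main_comb (Ac := A) x0 hBM (inj_bound hA hB hBM).
apply: ler_wpM2l; first by rewrite exprn_ge0 // ler0z.
rewrite (eq_bigr (fun n => (A n)%:R * (q%:Q)^-1 ^+ n)); last by move=> n _; rewrite exprVn.
rewrite [leRHS](eq_bigr (fun r => \sum_(0 <= b < (N %/ r).+1)
   'C(B r + b - 1, b)%:R * (q%:Q)^-1 ^+ (r * b))); last first.
  by move=> r _; apply: eq_bigr => b _; rewrite exprVn.
exact: key.
Qed.
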